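(* There exists a $(201,9)$-arc in $\operatorname{PG}(2,27)$; hence $m_9(2,27)\ge 201$.
   Context: Points of $\operatorname{PG}(2,q)$ are the 1-dimensional subspaces of $\operatorname{GF}(q)^3$, lines are the 2-dimensional subspaces. An $(n,r)$-arc in $\operatorname{PG}(2,q)$ is a set $\mathcal B$ of $n$ points such that every line contains at most $r$ points of $\mathcal B$ and at least one line contains exactly $r$ points of $\mathcal B$. $m_r(2,q)$ is the maximum $n$ for which an $(n,r)$-arc in $\operatorname{PG}(2,q)$ exists. *)

(* Defs.v *)
From mathcomp Require Import all_boot all_order all_algebra.
Set Implicit Arguments. Unset Strict Implicit. Unset Printing Implicit Defensive.
Import GRing.Theory.
Local Open Scope ring_scope.

(* Subspaces of GF(q)^3 = 'rV[F]_3 are represented canonically by the 3x3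
   matrices A with <<A>>%MS = A (the canonical generator of their row space). *)

Definition subspace (F : fieldType) (A : 'M[F]_3) : bool := (<<A>>%MS == A).

Definition pg_point (F : fieldType) (A : 'M[F]_3) : bool :=
  subspace A && (\rank A == 1%N).

Definition pg_line (F : fieldType) (A : 'M[F]_3) : bool :=
  subspace A && (\rank A == 2%N).

Definition on_line (F : finFieldType) (B : {set 'M[F]_3}) (L : 'M[F]_3) : nat :=
  #|[set P in B | (P <= L)%MS]|.

Definition is_arc (F : finFieldType) (n r : nat) (B : {set 'M[F]_3}) : Prop :=
  [/\ {in B, forall P, pg_point P},
      #|B| = n,
      (forall L, pg_line L -> (on_line B L <= r)%N)
    & exists2 L, pg_line L & on_line B L = r].

Definition is_arcb (F : finFieldType) (r : nat) (B : {set 'M[F]_3}) : bool :=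
  [&& [forall P in B, pg_point P],
      [forall L, pg_line L ==> (on_line B L <= r)%N]
    & [exists L, pg_line L && (on_line B L == r)]].

(* m_r(2,q): maximum size of an (n,r)-arc (0 if there is none) *)
Definition m_r (F : finFieldType) (r : nat) : nat :=
  \max_(B : {set 'M[F]_3} | is_arcb r B) #|B|.

(* Main.v *)
Require Import Defs.
From HB Require Import structures.
From mathcomp Require Import all_boot all_order all_algebra all_field.
From mathcomp Require Import ring.
Set Implicit Arguments. Unset Strict Implicit. Unset Printing Implicit Defensive.
Import GRing.Theory.

(* A concrete model of GF(27) = F_3[t]/(t^3 - t - 1). *)
Inductive F3 := Z0 | Z1 | Z2.
Definition eqF3 (x y : F3) : bool :=
  match x, y with Z0, Z0 | Z1, Z1 | Z2, Z2 => true | _, _ => false end.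
Lemma eqF3P : Equality.axiom eqF3. Proof. by case; case; constructor. Qed.
HB.instance Definition _ := hasDecEq.Build F3 eqF3P.

Definition add3 (x y : F3) : F3 :=
  match x, y with
  | Z0, _ => y | _, Z0 => x | Z1, Z1 => Z2 | Z2, Z2 => Z1 | _, _ => Z0 end.
Definition mul3 (x y : F3) : F3 :=
  match x, y with
  | Z0, _ => Z0 | _, Z0 => Z0 | Z1, _ => y | _, Z1 => x | Z2, Z2 => Z1 end.

Definition E := (F3 * F3 * F3)%type.
Definition ezero : E := (Z0, Z0, Z0).
Definition eone : E := (Z1, Z0, Z0).
Definition eadd (x y : E) : E :=
  (add3 x.1.1 y.1.1, add3 x.1.2 y.1.2, add3 x.2 y.2).
Definition emul (x y : E) : E :=
  let x0 := x.1.1 in let x1 := x.1.2 in let x2 := x.2 in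
  let y0 := y.1.1 in let y1 := y.1.2 in let y2 := y.2 in
  let p0 := mul3 x0 y0 in
  let p1 := add3 (mul3 x0 y1) (mul3 x1 y0) in
  let p2 := add3 (add3 (mul3 x0 y2) (mul3 x1 y1)) (mul3 x2 y0) in
  let p3 := add3 (mul3 x1 y2) (mul3 x2 y1) in
  let p4 := mul3 x2 y2 in
  (add3 p0 p3, add3 (add3 p1 p3) p4, add3 p2 p4).
Definition eneg (x : E) : E := emul (Z2, Z0, Z0) x.

Definition V := (E * E * E)%type.
Definition cdot (u v : V) : E :=
  eadd (eadd (emul u.1.1 v.1.1) (emul u.1.2 v.1.2)) (emul u.2 v.2).

Definition dec (n : nat) : F3 := match n with 0 => Z0 | 1 => Z1 | _ => Z2 end.
Definition decE (n : nat) : E := (dec (n %% 3), dec (n %/ 3 %% 3), dec (n %/ 9)).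
Definition decV (t : nat * nat * nat) : V := (decE t.1.1, decE t.1.2, decE t.2).

Definition raw : seq (nat * nat * nat) := [:: (0,0,1); (0,1,1); (0,1,2); (0,1,3); (0,1,4); (0,1,5); (0,1,18); (0,1,23); (0,1,26); (1,0,0); (1,0,1); (1,0,9); (1,0,11); (1,0,12); (1,0,13); (1,0,15); (1,0,16); (1,1,0); (1,1,1); (1,1,6); (1,1,7); (1,1,8); (1,1,9); (1,1,13); (1,1,16); (1,2,0); (1,2,1); (1,3,5); (1,3,10); (1,3,15); (1,3,19); (1,3,20); (1,3,23); (1,3,25); (1,3,26); (1,4,3); (1,4,12); (1,4,17); (1,4,18); (1,4,20); (1,4,21); (1,4,22); (1,4,26); (1,5,4); (1,5,11); (1,5,14); (1,5,18); (1,5,22); (1,5,23); (1,5,24); (1,5,25); (1,6,3); (1,6,6); (1,6,11); (1,6,14); (1,6,15); (1,6,20); (1,6,25); (1,6,26); (1,7,5); (1,7,7); (1,7,11); (1,7,12); (1,7,17); (1,7,22); (1,7,23); (1,7,25); (1,8,4); (1,8,8); (1,8,10); (1,8,12); (1,8,15); (1,8,18); (1,8,20); (1,8,22); (1,9,1); (1,9,3); (1,9,13); (1,9,19); (1,9,22); (1,10,1); (1,10,4); (1,10,8); (1,10,12); (1,10,14); (1,10,16); (1,10,17); (1,10,20); (1,11,5); (1,11,6); (1,11,7); (1,11,11); (1,11,13); (1,11,17); (1,11,20); (1,11,23); (1,12,4); (1,12,7); (1,12,8); (1,12,10); (1,12,12); (1,12,16); (1,12,18); (1,12,25); (1,13,1);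 (1,13,5); (1,13,16); (1,13,20); (1,13,24); (1,14,1); (1,14,3); (1,14,6); (1,14,9); (1,14,10); (1,14,15); (1,14,17); (1,14,25); (1,15,3); (1,15,6); (1,15,8); (1,15,9); (1,15,14); (1,15,15); (1,15,22); (1,15,26); (1,16,1); (1,16,4); (1,16,9); (1,16,21); (1,16,25); (1,17,1); (1,17,5); (1,17,7); (1,17,10); (1,17,11); (1,17,13); (1,17,14); (1,17,22); (1,18,4); (1,18,6); (1,18,8); (1,18,13); (1,18,16); (1,18,22); (1,18,23); (1,18,25); (1,19,4); (1,19,5); (1,19,7); (1,19,8); (1,19,13); (1,19,16); (1,19,23); (1,19,24); (1,20,5); (1,20,17); (1,20,19); (1,20,21); (1,20,24); (1,21,3); (1,21,5); (1,21,6); (1,21,7); (1,21,9); (1,21,13); (1,21,19); (1,21,26); (1,22,3); (1,22,14); (1,22,19); (1,22,21); (1,22,24); (1,23,5); (1,23,7); (1,23,8); (1,23,9); (1,23,13); (1,23,20); (1,23,25); (1,23,26); (1,24,3); (1,24,4); (1,24,6); (1,24,8); (1,24,9); (1,24,16); (1,24,18); (1,24,21); (1,25,4); (1,25,10); (1,25,19); (1,25,21); (1,25,24); (1,26,3); (1,26,6); (1,26,7); (1,26,9); (1,26,16); (1,26,18); (1,26,20); (1,26,22)].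
Definition vl : seq V := map decV raw.
Definition tests : seq V := map decV [:: (17,8,15); (24,17,18); (10,17,6); (22,7,4); (0,19,2); (6,9,6); (0,25,23); (21,10,1); (6,8,26); (4,10,12); (26,19,17); (2,22,18); (26,13,20); (23,11,8); (2,26,14); (23,15,10); (10,24,9); (0,16,3); (24,4,22); (24,1,2); (15,2,15); (24,19,11); (20,3,1); (25,8,1); (25,15,8); (12,10,0); (17,22,25); (18,0,20); (26,14,25); (7,10,13); (19,13,25); (12,12,23); (20,20,16); (18,16,15); (15,3,11); (6,15,1); (7,26,0); (4,13,11); (17,1,25); (10,0,1); (25,21,2); (25,17,1); (15,10,16); (23,14,23); (9,0,19); (0,17,24); (25,17,3); (10,16,12); (26,14,23); (22,6,8); (22,21,24); (17,20,11); (13,4,25); (4,0,21); (23,20,2); (8,10,11); (13,19,8); (20,9,2); (19,11,10); (22,4,4); (2,17,1); (17,5,23); (5,17,17); (18,18,13); (6,9,0); (0,17,8); (13,14,1); (22,19,19); (12,20,7); (7,21,3); (3,9,15)].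
Definition sig (v : V) : seq bool := [seq cdot v c == ezero | c <- tests].

Definition allF3 := [:: Z0; Z1; Z2].
Definition allel : seq E :=
  [seq (xy, z) | xy <- [seq (x, y) | x <- allF3, y <- allF3], z <- allF3].
Definition lns : seq V :=
  [seq (eone, y, z) | y <- allel, z <- allel] ++ [seq (ezero, eone, z) | z <- allel]
  ++ [:: (ezero, ezero, eone)].
Definition c9 : V := decV (0, 1, 0)%N.

Lemma chk_lines :
  all (fun c => count (fun v => cdot v c == ezero) vl <= 9) lns.
Proof. by vm_compute. Qed.
Lemma chk_sig : uniq (map sig vl). Proof. by vm_compute. Qed.
Lemma chk_nz : all (fun v => v != (ezero, ezero, ezero)) vl. Proof. by vm_compute. Qed.
Lemma chk_9 : count (fun v => cdot v c9 == ezero) vl = 9. Proof. by vm_compute. Qed.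
Lemma chk_c9 : c9 != (ezero, ezero, ezero). Proof. by vm_compute. Qed.
Lemma chk_inv :
  all (fun e => (e == ezero) || has (fun e' => emul e e' == eone) allel) allel.
Proof. by vm_compute. Qed.
Lemma chk_sub :
  all (fun x => all (fun y => (eadd x (eneg y) == ezero) ==> (x == y)) allel) allel.
Proof. by vm_compute. Qed.
Lemma allel_uniq : uniq allel. Proof. by vm_compute. Qed.
Lemma mem_allel e : e \in allel.
Proof. by case: e => [[x y] z]; case: x; case: y; case: z; vm_compute. Qed.
Lemma lns1 y z : (eone, y, z) \in lns.
Proof.
rewrite /lns mem_cat; apply/orP; left.
apply/allpairsP; exists (y, z); split => //; exact: mem_allel.
Qed.
Lemma lns2 z : (ezero, eone, z) \in lns.
Proof.
rewrite /lns !mem_cat; apply/orP; right; apply/orP; left.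
by apply: (map_f (fun z => (ezero, eone, z))); exact: mem_allel.
Qed.
Lemma lns3 : (ezero, ezero, eone) \in lns.
Proof. by rewrite /lns !mem_cat mem_seq1 eqxx !orbT. Qed.
Lemma size_vl : size vl = 201%N. Proof. by []. Qed.


Lemma card_nth n (s : seq V) (x0 : V) (Q : pred V) : size s = n ->
  #|[set i : 'I_n | Q (nth x0 s i)]| = count Q s.
Proof.
move=> hs; rewrite cardE /enum_mem size_filter -enumT.
rewrite (eq_count (a2 := fun i : 'I_n => Q (nth x0 s i))); last by move=> i; rewrite /= inE.
rewrite -(count_map val (fun k => Q (nth x0 s k))) val_enum_ord -hs.
by rewrite -[in RHS](mkseq_nth x0 s) /mkseq count_map.
Qed.

Local Open Scope ring_scope.
Section Main.
Variable F : finFieldType.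
Hypothesis hF : #|F| = 27%N.
Variable a : F.
Hypothesis ha : a ^+ 3 = a + 1.
Local Open Scope ring_scope.

Lemma char3 : (3%:R : F) = 0.
Proof.
have h : 3%N \in [pchar F] by apply: (@card_finPcharP _ 3 3).
exact: pcharf0 h.
Qed.

Lemma natr3 m n : m = n %[mod 3] -> (m%:R : F) = n%:R.
Proof.
move=> e; rewrite (divn_eq m 3) (divn_eq n 3) e !natrD !natrM char3 !mulr0 !add0r.
by [].
Qed.

Definition n3 (x : F3) : nat := match x with Z0 => 0 | Z1 => 1 | Z2 => 2 end.
Definition f (x : F3) : F := (n3 x)%:R.

Lemma f_add x y : f (add3 x y) = f x + f y.
Proof. by case: x; case: y; rewrite /f -natrD; apply: natr3; reflexivity. Qed.
Lemma f_mul x y : f (mul3 x y) = f x * f y.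
Proof. by case: x; case: y; rewrite /f -natrM; apply: natr3; reflexivity. Qed.

Definition phi (e : E) : F := f e.1.1 + f e.1.2 * a + f e.2 * a ^+ 2.

Lemma phi_add x y : phi (eadd x y) = phi x + phi y.
Proof. rewrite /phi /eadd /= !f_add; ring. Qed.

Lemma red (x0 x1 x2 y0 y1 y2 : F) :
  (x0 * y0 + (x1 * y2 + x2 * y1))
  + ((x0 * y1 + x1 * y0 + (x1 * y2 + x2 * y1)) + x2 * y2) * a
  + ((x0 * y2 + x1 * y1 + x2 * y0) + x2 * y2) * a ^+ 2
  = (x0 + x1 * a + x2 * a ^+ 2) * (y0 + y1 * a + y2 * a ^+ 2).
Proof.
have e3 : a ^+ 3 - a - 1 = 0 by rewrite ha; ring.
apply/eqP; rewrite -subr_eq0; apply/eqP.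
transitivity (- ((x1 * y2 + x2 * y1) + x2 * y2 * a) * (a ^+ 3 - a - 1)); first ring.
by rewrite e3 mulr0.
Qed.

Lemma phi_mul x y : phi (emul x y) = phi x * phi y.
Proof. rewrite /phi /emul /= !f_add !f_mul; exact: red. Qed.

Lemma phi_one : phi eone = 1.
Proof. rewrite /phi /f /=; ring. Qed.
Lemma phi_zero : phi ezero = 0.
Proof. rewrite /phi /f /=; ring. Qed.

Lemma phi_eq0 e : (phi e == 0) = (e == ezero).
Proof.
apply/eqP/eqP => [h|->]; last exact: phi_zero.
move: chk_inv => /allP/(_ e (mem_allel e))/orP[/eqP//|/hasP[e' _ /eqP he']].
have := phi_mul e e'; rewrite he' phi_one h mul0r.
by move/eqP; rewrite oner_eq0.
Qed.

Lemma phi_neg y : phi (eneg y) = - phi y.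
Proof.
rewrite /eneg phi_mul; suff -> : phi (Z2, Z0, Z0) = -1 by rewrite mulN1r.
rewrite /phi /f /=.
have : (2%:R : F) + 1 = 0 by rewrite -char3 -(natrD _ 2 1).
move/eqP; rewrite addr_eq0 => /eqP ->; ring.
Qed.

Lemma phi_inj x y : phi x = phi y -> x = y.
Proof.
move=> h.
have : phi (eadd x (eneg y)) == 0 by rewrite phi_add phi_neg h subrr.
rewrite phi_eq0.
move: chk_sub => /allP/(_ x (mem_allel x))/allP/(_ y (mem_allel y))/implyP H.
by move=> /H /eqP.
Qed.

Lemma phi_surj z : exists e, phi e = z.
Proof.
have U : uniq (map phi allel).
  by rewrite map_inj_in_uniq ?allel_uniq // => x y _ _; apply: phi_inj.
have S : {subset map phi allel <= enum F} by move=> x; rewrite mem_enum.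
have Sz : (size (enum F) <= size (map phi allel))%N by rewrite -cardE hF size_map.
have [_ Ez] := uniq_min_size U S Sz.
have : z \in map phi allel by rewrite Ez mem_enum.
by case/mapP => e _ ->; exists e.
Qed.

Definition sel (v : V) (j : 'I_3) : E :=
  match val j with 0 => v.1.1 | 1 => v.1.2 | _ => v.2 end.
Definition vec (v : V) : 'rV[F]_3 := \row_j phi (sel v j).

Lemma dotE v c : (vec v *m (vec c)^T) 0 0 = phi (cdot v c).
Proof.
rewrite !mxE !big_ord_recl big_ord0 !mxE /cdot !phi_add !phi_mul /=.
by rewrite addr0 addrA.
Qed.

Lemma mx11_eq0 (M : 'M[F]_1) : (M == 0) = (M 0 0 == 0).
Proof.
apply/eqP/eqP => [->|h]; first by rewrite mxE.
by apply/matrixP => i j; rewrite !ord1 mxE h.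
Qed.

Lemma keyE v c : (vec v *m (vec c)^T == 0) = (cdot v c == ezero).
Proof. by rewrite mx11_eq0 dotE phi_eq0. Qed.

Lemma subE v c : (<<vec v>> <= kermx (vec c)^T)%MS = (cdot v c == ezero).
Proof. by rewrite genmxE sub_kermx keyE. Qed.

Lemma vec_eq0 v : (vec v == 0) = (v == (ezero, ezero, ezero)).
Proof.
apply/eqP/eqP => [h|->].
  move/matrixP: h => h.
  have h0 := h 0 (Ordinal (isT : (0 < 3)%N)).
  have h1 := h 0 (Ordinal (isT : (1 < 3)%N)).
  have h2 := h 0 (Ordinal (isT : (2 < 3)%N)).
  rewrite !mxE /sel /= in h0 h1 h2.
  clear h; move: h0 h1 h2 => /eqP + /eqP + /eqP; rewrite !phi_eq0.
  by case: v => [[x y] z] /= /eqP -> /eqP -> /eqP ->.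
apply/matrixP => i j; rewrite !mxE /sel.
by case: j => [[|[|[|]]] ?] /=; rewrite phi_zero.
Qed.

Lemma rank_vec v : v != (ezero, ezero, ezero) -> \rank (vec v) = 1%N.
Proof. by rewrite rank_rV vec_eq0 => ->. Qed.

Lemma line_char L : pg_line L ->
  exists c : V, c \in lns /\ forall v, (<<vec v>> <= L)%MS = (cdot v c == ezero).
Proof.
move=> /andP[_ /eqP rL].
set N := cokermx L.
have LN : L *m N = 0 := mulmx_coker L.
have rN : \rank N = 1%N by rewrite mxrank_coker rL.
have [j Hj] : exists j, col j N != 0.
  case: (pickP (fun j => col j N != 0)) => [j Hj|H0]; first by exists j.
  suff N0 : N = 0 by move: rN; rewrite N0 mxrank0.
  apply/matrixP => i k; move: (H0 k) => /negbFE/eqP/matrixP/(_ i 0).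
  by rewrite !mxE.
set n := col j N.
have Ln : L *m n = 0 by rewrite /n colE mulmxA LN mul0mx.
have nE : forall p q : 'I_3, val p = val q -> n p 0 = n q 0.
  by move=> p q /val_inj ->.
set i0 : 'I_3 := Ordinal (isT : (0 < 3)%N).
set i1 : 'I_3 := Ordinal (isT : (1 < 3)%N).
set i2 : 'I_3 := Ordinal (isT : (2 < 3)%N).
have nz3 : [|| n i0 0 != 0, n i1 0 != 0 | n i2 0 != 0].
  apply: contraT => /norP[/negbNE/eqP h0 /norP[/negbNE/eqP h1 /negbNE/eqP h2]].
  move: Hj; rewrite -/n => /eqP; case; apply/matrixP => i l.
  rewrite ord1 [RHS]mxE; case: i => [[|[|[|//]]] Hi].
  - by rewrite -h0; apply: nE.
  - by rewrite -h1; apply: nE.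
  - by rewrite -h2; apply: nE.
have [k [Hk Hlt]] : exists k, n k 0 != 0 /\ forall i : 'I_3, (i < k)%N -> n i 0 = 0.
  case: (eqVneq (n i0 0) 0) => h0; last first.
    by exists i0; split => // i.
  case: (eqVneq (n i1 0) 0) => h1; last first.
    exists i1; split => // i; case: i => [[|//] Hi] _.
    by rewrite -h0; apply: nE.
  exists i2; split.
    by move: nz3; rewrite h0 h1 eqxx.
  case=> [[|[|//]] Hi] _; [rewrite -h0 | rewrite -h1]; exact: nE.
set n' := (n k 0)^-1 *: n.
have nk1 : n' k 0 = 1 by rewrite /n' mxE mulVf.
have nlt : forall i : 'I_3, (i < k)%N -> n' i 0 = 0.
  by move=> i /Hlt h; rewrite /n' mxE h mulr0.
have nn' : forall w : 'rV_3, (w *m n == 0) = (w *m n' == 0).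
  by move=> w; rewrite /n' -scalemxAr scaler_eq0 invr_eq0 (negbTE Hk).
clearbody n'.
have [e0 He0] := phi_surj (n' i0 0).
have [e1 He1] := phi_surj (n' i1 0).
have [e2 He2] := phi_surj (n' i2 0).
set c : V := (e0, e1, e2).
have Hc : (vec c)^T = n'.
  apply/matrixP => i l; rewrite ord1 !mxE /sel.
  by case: i => [[|[|[|]]] ?] //=; [rewrite He0 | rewrite He1 | rewrite He2];
    congr (n' _ 0); apply: val_inj.
have z0 : (0 < k)%N -> e0 = ezero.
  by move=> h; have := nlt i0 h; rewrite -He0 -phi_zero => /phi_inj.
have z1 : (1 < k)%N -> e1 = ezero.
  by move=> h; have := nlt i1 h; rewrite -He1 -phi_zero => /phi_inj.
exists c; split.
  rewrite -Hc !mxE /sel in nk1.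
  move: nk1 z0 z1; rewrite -phi_one => /phi_inj.
  case: k {Hk Hlt nlt} => [[|[|[|//]]] ?] h z0 z1; rewrite /sel /c /= in h;
    rewrite /c.
  - by rewrite h; apply: lns1.
  - by rewrite h z0 //; apply: lns2.
  - by rewrite h z0 // z1 //; apply: lns3.
move=> v.
have rn : \rank n = 1%N.
  by rewrite -mxrank_tr rank_rV trmx_eq0 Hj.
have sLK : (L <= kermx n)%MS by rewrite sub_kermx Ln.
have rK : \rank (kermx n) = 2%N by rewrite mxrank_ker rn.
have eLK : (L == kermx n)%MS by rewrite -(mxrank_leqif_eq sLK).2 rL rK.
have sKL : (kermx n <= L)%MS by move/andP: eLK => [].
have -> : (<<vec v>> <= L)%MS = (<<vec v>> <= kermx n)%MS.
  apply/idP/idP => h; [exact: submx_trans sLK | exact: submx_trans sKL].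
by rewrite genmxE sub_kermx -keyE Hc nn'.
Qed.


Definition v0 : V := (ezero, ezero, ezero).
Definition pt (i : 'I_201) : 'M[F]_3 := <<vec (nth v0 vl i)>>%MS.
Definition B : {set 'M[F]_3} := [set pt i | i : 'I_201].

Lemma pt_sig i j : pt i = pt j -> sig (nth v0 vl i) = sig (nth v0 vl j).
Proof.
move=> e; apply: eq_map => c /=.
by rewrite -!subE -/(pt i) -/(pt j) e.
Qed.

Lemma pt_inj : injective pt.
Proof.
move=> i j /pt_sig e; apply: val_inj => /=.
have si : (i < size (map sig vl))%N by rewrite size_map size_vl.
have sj : (j < size (map sig vl))%N by rewrite size_map size_vl.
have h := nth_uniq [::] si sj chk_sig.
apply/eqP; rewrite -h.
rewrite (nth_map v0); last by rewrite size_vl.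
rewrite (nth_map v0); last by rewrite size_vl.
by rewrite e.
Qed.

Lemma card_on c L : (forall v, (<<vec v>> <= L)%MS = (cdot v c == ezero)) ->
  on_line B L = count (fun v => cdot v c == ezero) vl.
Proof.
move=> hc; rewrite /on_line.
have -> : [set P in B | (P <= L)%MS] =
          pt @: [set i : 'I_201 | cdot (nth v0 vl i) c == ezero].
  apply/setP => P; rewrite !inE; apply/andP/imsetP.
    by case=> /imsetP[i _ ->] hP; exists i => //; rewrite inE -hc.
  by case=> i; rewrite inE => hi ->; split; [apply: imset_f | rewrite /pt hc].
by rewrite card_imset; [exact: card_nth | exact: pt_inj].
Qed.

Lemma pt_point i : pg_point (pt i).
Proof.
apply/andP; split; first by rewrite /subspace /pt genmx_id.
rewrite /pt genmxE rank_vec //.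
by move: chk_nz => /allP; apply; apply: mem_nth; rewrite size_vl.
Qed.

Lemma arcB : is_arc 201%N 9%N B.
Proof.
split.
- by move=> P /imsetP[i _ ->]; exact: pt_point.
- by rewrite card_imset ?cardT ?size_enum_ord //; exact: pt_inj.
- move=> L /line_char [c [h1 h2]]; rewrite (card_on h2).
  by move: chk_lines => /allP /(_ c h1).
- exists <<kermx (vec c9)^T>>%MS.
    apply/andP; split; first by rewrite /subspace genmx_id.
    by rewrite genmxE mxrank_ker mxrank_tr rank_vec // chk_c9.
  rewrite (@card_on c9) ?chk_9 // => v.
  by rewrite -subE !genmxE.
Qed.

Lemma arcbB : is_arcb 9%N B.
Proof.
have [h1 _ h3 [L h4 h5]] := arcB.
apply/and3P; split.
- by apply/forall_inP => P /h1.
- by apply/forallP => L'; apply/implyP => /h3.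
- by apply/existsP; exists L; rewrite h4 h5 eqxx.
Qed.

End Main.

Section RootS.
Local Open Scope ring_scope.


Variable F : finFieldType.
Hypothesis hF : #|F| = 27%N.

Lemma char3r : (3%:R : F) = 0.
Proof.
have h : 3%N \in [pchar F] by apply: (@card_finPcharP _ 3 3).
exact: pcharf0 h.
Qed.

Definition slist : seq F := [seq n%:R | n <- [:: 0; 1; 2; 1; 0; 2; 2; 1; 1; 1; 0; 1; 0; 0; 1; 2; 1; 0; 2; 2; 1; 1; 1; 0; 1]%N].

Lemma hS (a : F) : (a^+3 - a - 1) * horner_rec slist a = a^+27 - a.
Proof.
have e : (a^+3 - a - 1) * horner_rec slist a = a^+27 - a - 3%:R *
  (a^+2+a^+3+a^+6+a^+7+a^+15+a^+16+a^+19+a^+20).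
  rewrite /=. ring.
by rewrite e char3r mul0r subr0.
Qed.

Lemma root_ex : exists a : F, a^+3 = a + 1.
Proof.
case: (boolP [exists a : F, a^+3 - a - 1 == 0]) => [/existsP[a /eqP Ha]|/existsPn H].
  by exists a; apply/eqP; rewrite -subr_eq0 opprD addrA Ha.
exfalso.
have nz : Poly slist != 0.
  by rewrite -size_poly_eq0 (PolyK (c:=0)) //= oner_neq0.
have hall : all (root (Poly slist)) (enum F).
  apply/allP => a _; rewrite /root horner_Poly.
  have := hS a; have := expf_card a; rewrite hF => ->; rewrite subrr => /eqP.
  by rewrite mulf_eq0 (negbTE (H a)) /=.
have := max_ring_poly_roots nz hall.
rewrite uniq_rootsE enum_uniq -cardE hF (PolyK (c:=0)) ?oner_neq0 //.
by move/(_ isT); rewrite size_map.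
Qed.

End RootS.

Local Close Scope ring_scope.

Theorem mainTheorem13 (F : finFieldType) (hF : #|F| = 27%N) :
  (exists B : {set 'M[F]_3}, is_arc 201 9 B) /\ (201 <= m_r F 9)%N.
Proof.
have [a ha] := root_ex hF.
split; first by exists (B a); exact (arcB hF ha).
have [_ hc _ _] := arcB hF ha.
rewrite -hc /m_r.
by apply: leq_bigmax_cond; apply (arcbB hF ha).
Qed.
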